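(* Fix $\alpha\in(0,1)$, $d\ge2$, $a\in\mathbb{R}$, $w=(w_1,\dots,w_d)\in\mathbb{R}^d$, $\beta\in\mathbb{R}$, and $\Delta t>0$ with $\Delta t<1/C^2$ where $C=\max\{|a|,\max_i|w_i|\}$ (assume $C>0$). Define $T:\mathbb{R}^d\to\mathbb{R}^d$, $x\mapsto y$, by $y^{(i)}=x^{(i)}$ for $i=1,\dots,d-1$ and $y^{(d)}=x^{(d)}+a\,\Delta t\tanh(w\cdot x+\beta)$, where superscripts denote coordinates. Then for every compact $\mathcal{K}\subset\mathbb{R}^d$ and every $\varepsilon>0$ there exist $L\in\mathbb{N}$ and $f_L\in\mathcal{N}_d(L)$ with $\|T(x)-f_L(x)\|\le\varepsilon$ for all $x\in\mathcal{K}$.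
   Context: Leaky-ReLU: $\sigma_\alpha(x)=\max(\alpha x,x)$, applied componentwise. $\mathcal{N}_d(L)$ consists of all maps $f_L:\mathbb{R}^d\to\mathbb{R}^d$ defined recursively by $f_0(x)=W^{[0]}x+b^{[0]}$, $f_k(x)=W^{[k]}\sigma_\alpha(f_{k-1}(x))+b^{[k]}$ for $k=1,\dots,L$, with arbitrary $W^{[k]}\in\mathbb{R}^{d\times d}$, $b^{[k]}\in\mathbb{R}^d$. *)

(* Defs.v *)
From HB Require Import structures.
From mathcomp Require Import all_boot all_order all_algebra.
From mathcomp Require Import all_classical all_reals all_analysis.
Set Implicit Arguments. Unset Strict Implicit. Unset Printing Implicit Defensive.
Import Order.TTheory GRing.Theory Num.Theory.
Import numFieldNormedType.Exports.
Local Open Scope ring_scope.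

Definition tanh {R : realType} (x : R) : R :=
  (expR x - expR (- x)) / (expR x + expR (- x)).

Definition leaky {R : realType} (alpha x : R) : R := Num.max (alpha * x) x.

Definition leaky_vec {R : realType} {d : nat} (alpha : R) (v : 'cV[R]_d) : 'cV[R]_d :=
  \col_i leaky alpha (v i 0).

Fixpoint nn_eval {R : realType} {d : nat} (alpha : R)
  (W : nat -> 'M[R]_d) (b : nat -> 'cV[R]_d) (L : nat) (x : 'cV[R]_d) : 'cV[R]_d :=
  match L with
  | 0 => W 0%N *m x + b 0%N
  | k.+1 => W k.+1 *m leaky_vec alpha (nn_eval alpha W b k x) + b k.+1
  end.

Definition in_NN {R : realType} {d : nat} (alpha : R) (L : nat)
  (f : 'cV[R]_d -> 'cV[R]_d) : Prop :=
  exists (W : nat -> 'M[R]_d) (b : nat -> 'cV[R]_d), forall x, f x = nn_eval alpha W b L x.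

Definition enorm {R : realType} {d : nat} (v : 'cV[R]_d) : R :=
  Num.sqrt (\sum_i (v i 0) ^+ 2).

Definition dotv {R : realType} {d : nat} (w x : 'cV[R]_d) : R := \sum_i w i 0 * x i 0.

Definition Tmap {R : realType} {d : nat} (a dt beta : R) (w x : 'cV[R]_d) : 'cV[R]_d :=
  \col_i (if (val i == d.-1)%N then x i 0 + a * dt * tanh (dotv w x + beta) else x i 0).

(* Main.v *)
Require Import Defs.
From HB Require Import structures.
From mathcomp Require Import all_boot all_order all_algebra.
From mathcomp Require Import all_classical all_reals all_analysis.
From mathcomp Require Import ring lra.
Import Order.TTheory GRing.Theory Num.Theory.
Import numFieldNormedType.Exports.
Local Open Scope ring_scope.
Local Open Scope classical_set_scope.

Set Implicit Arguments. Unset Strict Implicit.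
Section T.
Context {R : realType}.

Definition Ef (y : R) := expR y ^+ 2 + 1.

Lemma Ef_gt0 y : 0 < Ef y.
Proof. by rewrite /Ef; apply: ltr_wpDl; [exact: sqr_ge0|exact: ltr01]. Qed.

Lemma tanhE (x : R) : tanh x = 1 - 2 * (Ef x)^-1.
Proof.
rewrite /tanh /Ef expRN.
have e0 := expR_gt0 x.
have h1 : expR x ^+ 2 + 1 != 0 by rewrite gt_eqF // (Ef_gt0 x).
field. by rewrite h1 gt_eqF.
Qed.

Lemma is_derive_Ef (x : R) : is_derive x 1 Ef (2 * expR x * expR x).
Proof.
rewrite /Ef. apply: is_derive_eq. by rewrite /GRing.scale /=; ring.
Qed.

Definition thD (x : R) := 2 * (Ef x)^-2 * (2 * expR x * expR x).

Lemma is_derive_th (x : R) : is_derive x 1 (fun y => 1 - 2 * (Ef y)^-1) (thD x).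
Proof.
have h := @is_deriveV R Ef x _ 1 (lt0r_neq0 (Ef_gt0 x)) (is_derive_Ef x).
apply: is_derive_eq. rewrite /thD /GRing.scale /=. ring.
Qed.

Lemma thD_ge0 x : 0 <= thD x.
Proof.
rewrite /thD. have := Ef_gt0 x; have := expR_gt0 x => e0 f0.
apply: mulr_ge0; first by apply: divr_ge0 => //; apply: exprn_ge0; apply: ltW.
by rewrite !mulr_ge0 // ltW.
Qed.

Lemma thD_le1 x : thD x <= 1.
Proof.
rewrite /thD. have := Ef_gt0 x; have := expR_gt0 x => e0 f0.
have -> : 2 / Ef x ^+ 2 * (2 * expR x * expR x) = (4 * expR x ^+ 2) / Ef x ^+ 2.
  by rewrite /=; field; rewrite lt0r_neq0.
rewrite ler_pdivrMr ?exprn_gt0 // mul1r /Ef.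
set E := expR x. have : 0 <= (E ^+ 2 - 1) ^+ 2 by apply: sqr_ge0.
nra.
Qed.

Lemma tanh_lip (u v : R) : u <= v -> 0 <= tanh v - tanh u <= v - u.
Proof.
move=> uv.
have hc : {within `[u, v], continuous (fun y => 1 - 2 * (Ef y)^-1)}.
  by apply: derivable_within_continuous => x _; case: (is_derive_th x).
have [c _ H] := @MVT_segment R (fun y => 1 - 2 * (Ef y)^-1) thD u v uv
  (fun x _ => is_derive_th x) hc.
rewrite !tanhE H. have := thD_ge0 c; have := thD_le1 c. nra.
Qed.

End T.
Section OneD.
Context {R : realType} (al : R).

Fixpoint ev1 (Q B : nat -> R) (L : nat) (u : R) : R :=
  match L with
  | 0 => Q 0%N * u + B 0%N
  | k.+1 => Q k.+1 * leaky al (ev1 Q B k u) + B k.+1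
  end.

Definition F1 (f : R -> R) := exists L Q B, forall u, f u = ev1 Q B L u.

Lemma ev1_ext Q B Q' B' L :
  (forall i, (i <= L)%N -> Q i = Q' i /\ B i = B' i) ->
  forall u, ev1 Q B L u = ev1 Q' B' L u.
Proof.
elim: L => [|k IH] H u /=; first by case: (H 0%N) => // -> ->.
rewrite IH; last by move=> i ik; apply: H; apply: leqW.
by case: (H k.+1) => // -> ->.
Qed.

Lemma F1_ext f g : (forall u, f u = g u) -> F1 f -> F1 g.
Proof. by move=> fg [L [Q [B H]]]; exists L, Q, B => u; rewrite -fg. Qed.

Lemma F1_aff q r : F1 (fun u => q * u + r).
Proof. by exists 0%N, (fun _ => q), (fun _ => r). Qed.

Lemma F1_post f c e : F1 f -> F1 (fun u => c * f u + e).
Proof.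
move=> [L [Q [B H]]].
exists L, (fun i => if i == L then c * Q i else Q i),
  (fun i => if i == L then c * B i + e else B i) => u.
rewrite H; case: L Q B H => [|k] Q B H /=; rewrite ?eqxx; first by ring.
rewrite (@ev1_ext _ _ Q B); first by ring.
by move=> i ik; rewrite ltn_eqF // ltnS.
Qed.

Lemma F1_sig f : F1 f -> F1 (fun u => leaky al (f u)).
Proof.
move=> [L [Q [B H]]].
exists L.+1, (fun i => if i == L.+1 then 1 else Q i),
  (fun i => if i == L.+1 then 0 else B i) => u /=.
rewrite eqxx mul1r addr0 H (@ev1_ext _ _ Q B) //.
by move=> i ik; rewrite ltn_eqF // ltnS.
Qed.

Lemma F1_iter k f : F1 f -> F1 (fun u => iter k (leaky al) (f u)).
Proof.
move=> Ff; elim: k => [|k IH] //.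
by apply: (F1_ext _ (F1_sig IH)) => u; rewrite iterS.
Qed.

Hypothesis al01 : 0 < al < 1.

Lemma leaky_pos x : 0 <= x -> leaky al x = x.
Proof. move=> x0; case/andP: al01 => a0 a1; rewrite /leaky max_r //; nra. Qed.

Lemma leaky_neg x : x <= 0 -> leaky al x = al * x.
Proof. move=> x0; case/andP: al01 => a0 a1; rewrite /leaky max_l //; nra. Qed.

Lemma iter_pos k x : 0 <= x -> iter k (leaky al) x = x.
Proof. by move=> x0; elim: k => [|k IH] //=; rewrite IH leaky_pos. Qed.

Lemma iter_neg k x : x <= 0 -> iter k (leaky al) x = al ^+ k * x.
Proof.
move=> x0; elim: k => [|k IH] /=; first by rewrite mul1r.
have h : 0 <= al ^+ k by apply: exprn_ge0; case/andP: al01 => /ltW.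
rewrite IH leaky_neg ?exprS ?mulrA //; nra.
Qed.

Lemma bern n : al ^+ n * (1 + n%:R * (1 - al)) <= 1.
Proof.
elim: n => [|n IH]; first by rewrite expr0 mul0r addr0 mul1r.
have h1 : al ^+ n.+1 <= 1 by case/andP: al01 => /ltW h0 /ltW h1; exact: exprn_ile1.
have h0 : 0 <= al ^+ n by apply: exprn_ge0; case/andP: al01 => /ltW.
rewrite exprS -natr1. case/andP: al01 => a0 a1.
rewrite exprS in h1.
set P := al ^+ n in IH h0 h1 *.
have e1 : al * (P * (1 + n%:R * (1 - al))) <= al * 1 by rewrite ler_wpM2l // ltW.
have e2 : (1 - al) * (al * P) <= (1 - al) * 1 by rewrite ler_wpM2l // subr_ge0 ltW.
nra.
Qed.

Lemma small_pow (r : R) : 0 < r -> exists k, (0 < k)%N /\ al ^+ k <= r.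
Proof.
move=> r0.
set n := (Num.Def.trunc (r^-1 / (1 - al))).+1.
exists n; split => //.
have h := truncnS_gt (r^-1 / (1 - al)).
have hb := bern n.
have a1 : 0 < 1 - al by case/andP: al01 => _; rewrite subr_gt0.
have h0 : 0 <= al ^+ n by apply: exprn_ge0; case/andP: al01 => /ltW.
have : r^-1 < n%:R * (1 - al) by rewrite -ltr_pdivrMr.
move=> H.
have : al ^+ n * r^-1 <= 1 by nra.
by rewrite -ler_pdivlMr ?invr_gt0 // invrK mul1r.
Qed.

Lemma Dlo k y v : v <= y -> y - iter k (leaky al) (y - v) = v.
Proof. by move=> vy; rewrite iter_pos ?subr_ge0 //; ring. Qed.

Lemma Dhi k y v : y <= v -> y - iter k (leaky al) (y - v) = y + al ^+ k * (v - y).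
Proof. by move=> vy; rewrite iter_neg ?subr_le0 //; ring. Qed.

Lemma Ulo k y v : v <= y -> y + (al ^+ k)^-1 * iter k (leaky al) (v - y) = v.
Proof.
move=> vy; rewrite iter_neg ?subr_le0 // mulrA mulVf ?mul1r; first by ring.
by rewrite expf_neq0 // lt0r_neq0 //; case/andP: al01.
Qed.

Lemma Uhi k y v : y <= v -> y + (al ^+ k)^-1 * iter k (leaky al) (v - y) = y + (al ^+ k)^-1 * (v - y).
Proof. by move=> vy; rewrite iter_pos ?subr_ge0. Qed.

Lemma approx1D (phi : R -> R) (m Lc A E : R) :
  0 < m -> m <= Lc -> 0 < E ->
  (forall u v, u <= v -> m * (v - u) <= phi v - phi u <= Lc * (v - u)) ->
  forall n : nat, exists p, F1 p /\
    (forall u, A <= u <= A + n%:R * (E / Lc) -> `|p u - phi u| <= E /\ p u <= phi (A + n%:R * (E / Lc))) /\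
    (forall u, A + n%:R * (E / Lc) <= u -> p u = phi (A + n%:R * (E / Lc)) + Lc * (u - (A + n%:R * (E / Lc)))).
Proof.
move=> m0 mL E0 Hphi.
have L0 : 0 < Lc by apply: lt_le_trans mL.
have [k [k0 hk]] := small_pow (divr_gt0 m0 L0).
set a := al ^+ k.
have a0 : 0 < a by rewrite /a exprn_gt0 //; case/andP: al01.
have a1 : a < 1 by rewrite /a; case/andP: al01 => b0 b1; rewrite expr_lt1 // ltW.
have aL : a * Lc <= m by move: hk; rewrite -/a ler_pdivlMr.
set h := E / Lc.
have h0 : 0 < h by rewrite divr_gt0.
have hE : Lc * h = E by rewrite /h mulrC divfK // lt0r_neq0.
have mono : forall u v, u <= v -> phi u <= phi v.
  by move=> u v uv; have := Hphi u v uv; nra.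
elim=> [|n [p [Fp [IH1 IH2]]]].
  exists (fun u => Lc * u + (phi A - Lc * A)); split; first exact: F1_aff.
  rewrite mul0r addr0; split.
    move=> u /andP[u1 u2]; have -> : u = A by apply/eqP; rewrite eq_le u1 u2.
    have -> : Lc * A + (phi A - Lc * A) - phi A = 0 by ring.
    split; [by rewrite normr0 ltW | lra].
  by move=> u _; ring.
set zn := A + n%:R * h in IH1 IH2 *.
have -> : A + n.+1%:R * h = zn + h by rewrite -natr1 /zn; ring.
set z1 := zn + h.
have /andP[hD1 hD2] : m * h <= phi z1 - phi zn <= Lc * h.
  have e : z1 - zn = h by rewrite /z1; ring.
  by rewrite -e; apply: Hphi; rewrite /z1 lerDl ltW.
set D := phi z1 - phi zn in hD1 hD2.
set t := (D - a * Lc * h) / (Lc - a * Lc).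
have den0 : 0 < Lc - a * Lc by nra.
have ht : Lc * t + a * Lc * (h - t) = D.
  by rewrite /t; field; rewrite lt0r_neq0.
have aLh : a * Lc * h <= m * h by rewrite ler_wpM2r // ltW.
have t0 : 0 <= t by apply: divr_ge0; [lra | exact: ltW].
have th : t <= h by rewrite /t ler_pdivrMr //; nra.
set y0 := phi zn + Lc * t.
set y1 := phi z1.
have hDe : phi z1 = phi zn + D by rewrite /D; ring.
have y01 : y1 = y0 + a * Lc * (h - t) by rewrite /y1 /y0; lra.
have y0e : y0 = phi zn + Lc * t by [].
have y1e : y1 = phi z1 by [].
have Lct : 0 <= Lc * t by apply: mulr_ge0 => //; apply: ltW.
have znz1 : phi zn <= phi z1 by apply: mono; rewrite /z1 lerDl ltW.
exists (fun u => y1 + (al ^+ k)^-1 * iter k (leaky al)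
         ((y0 - iter k (leaky al) (y0 - p u)) - y1)).
split.
  have G1 : F1 (fun u => y0 - p u).
    by apply: (F1_ext _ (F1_post (-1) y0 Fp)) => u; ring.
  have G2 : F1 (fun u => (y0 - iter k (leaky al) (y0 - p u)) - y1).
    by apply: (F1_ext _ (F1_post (-1) (y0 - y1) (F1_iter k G1))) => u; ring.
  by apply: (F1_ext _ (F1_post (al ^+ k)^-1 y1 (F1_iter k G2))) => u; ring.
have key : forall u, A <= u -> 
  (u <= zn -> y1 + (al ^+ k)^-1 * iter k (leaky al) ((y0 - iter k (leaky al) (y0 - p u)) - y1) = p u) /\
  (zn <= u -> u <= z1 -> 
     let v := y1 + (al ^+ k)^-1 * iter k (leaky al) ((y0 - iter k (leaky al) (y0 - p u)) - y1) in
     phi zn <= v <= phi z1) /\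
  (z1 <= u -> y1 + (al ^+ k)^-1 * iter k (leaky al) ((y0 - iter k (leaky al) (y0 - p u)) - y1) = y1 + Lc * (u - z1)).
  move=> u Au; split; last split.
  - move=> uzn.
    have [_ pz] := IH1 u (introT andP (conj Au uzn)).
    have py0 : p u <= y0 by rewrite /y0; nra.
    rewrite Dlo //. apply: Ulo; nra.
  - move=> znu uz1 /=.
    have pu := IH2 u znu.
    have [ut|tu] := lerP (u - zn) t.
      have py0 : p u <= y0 by rewrite pu /y0; nra.
      rewrite Dlo // Ulo; last by nra.
      rewrite pu; apply/andP; split; nra.
    have py0 : y0 <= p u by rewrite pu /y0; nra.
    rewrite Dhi // -/a.
    have e : a * (p u - y0) = a * Lc * (u - zn - t) by rewrite pu /y0; ring.
    have uzh : u - zn <= h by move: uz1; rewrite /z1; lra.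
    have aLc0 : 0 <= a * Lc by apply: mulr_ge0; apply: ltW.
    have q1 : a * Lc * (u - zn - t) <= a * Lc * (h - t) by apply: ler_wpM2l => //; lra.
    have q2 : 0 <= a * Lc * (u - zn - t) by apply: mulr_ge0 => //; lra.
    rewrite e Ulo; last by lra.
    apply/andP; split; lra.
  - move=> z1u.
    have znu : zn <= u by apply: le_trans z1u; rewrite /z1 lerDl ltW.
    have pu := IH2 u znu.
    have uzh : h <= u - zn by move: z1u; rewrite /z1; lra.
    have q3 : Lc * t <= Lc * (u - zn) by apply: ler_wpM2l; [apply: ltW|lra].
    have py0 : y0 <= p u by rewrite pu y0e; lra.
    rewrite Dhi // -/a.
    have e : a * (p u - y0) = a * Lc * (u - zn - t) by rewrite pu /y0; ring.
    have aLc0 : 0 <= a * Lc by apply: mulr_ge0; apply: ltW.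
    have q1 : a * Lc * (h - t) <= a * Lc * (u - zn - t) by apply: ler_wpM2l => //; lra.
    rewrite e Uhi -/a; last by lra.
    rewrite y01 /z1; field; exact: lt0r_neq0.
split.
  move=> u /andP[Au uz1].
  have [k1 [k2 k3]] := key u Au.
  have [uzn|znu] := lerP u zn.
    rewrite k1 //.
    have [IHa IHb] := IH1 u (introT andP (conj Au uzn)).
    split; first by [].
    by apply: le_trans IHb znz1.
  have /andP[v1 v2] := k2 (ltW znu) uz1.
  have p1 := mono _ _ (ltW znu). have p2 := mono _ _ uz1.
  split; last by [].
  rewrite ler_norml; apply/andP; split; lra.
move=> u z1u.
have Au : A <= u.
  apply: le_trans z1u; rewrite /z1 /zn -addrA lerDl.
  by apply: addr_ge0; [apply: mulr_ge0; [apply: ler0n|apply: ltW]|apply: ltW].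
by have [_ [_ k3]] := key u Au; rewrite k3.
Qed.
End OneD.
Lemma coord_bound {R : realType} (d : nat) (K : set 'cV[R]_d) :
  compact K -> exists M : R, 0 <= M /\ forall x, K x -> forall i, `|x i 0| <= M.
Proof.
move=> Kc.
have := compact_bounded Kc. rewrite /bounded_set => -[M0 [_ HM]].
have h1 : M0 < `|M0| + 1 by apply: le_lt_trans (ler_norm _) _; rewrite ltrDl.
exists (`|M0| + 1); split; first by apply: addr_ge0.
move=> x Kx i.
have := HM _ h1 x Kx => /=.
apply: le_trans.
have -> : `|x| = mx_norm x by [].
rewrite mx_normrE.
exact: (le_bigmax _ (fun ij : 'I_d * 'I_1 => `|x ij.1 ij.2|) (i, 0)).
Qed.
Section NN.
Context {R : realType} {d : nat} (al : R).

Lemma nn_ext (W W' : nat -> 'M[R]_d) (b b' : nat -> 'cV[R]_d) L :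
  (forall i, (i <= L)%N -> W i = W' i /\ b i = b' i) ->
  forall x, nn_eval al W b L x = nn_eval al W' b' L x.
Proof.
elim: L => [|k IH] H x /=; first by case: (H 0%N) => // -> ->.
rewrite IH; last by move=> i ik; apply: H; apply: leqW.
by case: (H k.+1) => // -> ->.
Qed.

Lemma nn_pre (A : 'M[R]_d) W b L x :
  nn_eval al (fun k => if k == 0%N then W k *m A else W k) b L x =
  nn_eval al W b L (A *m x).
Proof. by elim: L => [|k IH] /=; [rewrite mulmxA | rewrite IH]. Qed.

Lemma nn_post (A : 'M[R]_d) (c : 'cV[R]_d) W b L x :
  nn_eval al (fun k => if k == L then A *m W k else W k)
             (fun k => if k == L then A *m b k + c else b k) L x =
  A *m nn_eval al W b L x + c.
Proof.
case: L => [|k] /=; first by rewrite mulmxDr mulmxA addrA.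
rewrite eqxx (@nn_ext _ W _ b); first by rewrite mulmxDr mulmxA addrA.
by move=> i ik; rewrite ltn_eqF // ltnS.
Qed.
End NN.
Section Lift.
Context {R : realType} {n : nat} (al : R).
Hypothesis al01 : 0 < al < 1.

Definition Wl (Q : nat -> R) k : 'M[R]_n.+1 :=
  diag_mx (\row_i (if i == ord_max then Q k else 1)).
Definition bl (B : nat -> R) (M : R) k : 'cV[R]_n.+1 :=
  \col_i (if i == ord_max then B k else if k == 0%N then M else 0).

Lemma nn_lift Q B M k (y : 'cV[R]_n.+1) :
  (forall i, i != ord_max -> 0 <= y i 0 + M) ->
  nn_eval al (Wl Q) (bl B M) k y =
  \col_i (if i == ord_max then ev1 al Q B k (y ord_max 0) else y i 0 + M).
Proof.
move=> yM; elim: k => [|k IH] /=; apply/matrixP => i j; rewrite (ord1 j).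
  rewrite /Wl mul_diag_mx !mxE.
  by case: eqP => [->|_] //; rewrite mul1r.
rewrite IH /Wl. rewrite mxE (mul_diag_mx (R:=R)). rewrite !mxE.
case: ifP => hi //.
by rewrite mul1r addr0 leaky_pos // yM // hi.
Qed.
End Lift.
Section Mats.
Context {R : realType} {n : nat}.

Definition Pm (w : 'cV[R]_n.+1) : 'M[R]_n.+1 :=
  \matrix_(i, j) (if i == ord_max then w j 0 else (i == j)%:R).
Definition Pinv (w : 'cV[R]_n.+1) : 'M[R]_n.+1 :=
  \matrix_(i, j) (if i == ord_max then
     (if j == ord_max then (w ord_max 0)^-1 else - w j 0 / w ord_max 0)
     else (i == j)%:R).

Lemma sum_delta (v : 'cV[R]_n.+1) i : \sum_j (i == j)%:R * v j 0 = v i 0.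
Proof.
rewrite (bigD1 i) //= eqxx mul1r big1 ?addr0 // => j ji.
by rewrite eq_sym (negbTE ji) mul0r.
Qed.

Lemma dotv_split (w x : 'cV[R]_n.+1) :
  dotv w x = w ord_max 0 * x ord_max 0 + \sum_(j | j != ord_max) w j 0 * x j 0.
Proof. by rewrite /dotv (bigD1 ord_max). Qed.

Lemma P_mul (w x : 'cV[R]_n.+1) i : (Pm w *m x) i 0 = if i == ord_max then dotv w x else x i 0.
Proof.
rewrite mxE; under eq_bigr => j _ do rewrite mxE.
case: ifP => _; first by [].
exact: sum_delta.
Qed.

Lemma Pinv_other (w v : 'cV[R]_n.+1) i : i != ord_max -> (Pinv w *m v) i 0 = v i 0.
Proof.
move=> hi; rewrite mxE; under eq_bigr => j _ do rewrite mxE (negbTE hi).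
exact: sum_delta.
Qed.

Lemma Pinv_last (w v : 'cV[R]_n.+1) : w ord_max 0 != 0 -> (Pinv w *m v) ord_max 0 =
  (v ord_max 0 - \sum_(j | j != ord_max) w j 0 * v j 0) / w ord_max 0.
Proof.
move=> w0; rewrite mxE; under eq_bigr => j _ do rewrite mxE eqxx.
rewrite (bigD1 ord_max) //= eqxx.
have -> : \sum_(j | j != ord_max)
    (if j == ord_max then (w ord_max 0)^-1 else - w j 0 / w ord_max 0) * v j 0 =
    - (\sum_(j | j != ord_max) w j 0 * v j 0) / w ord_max 0.
  rewrite mulNr mulr_suml -sumrN; apply: eq_bigr => j /negbTE ->.
  by ring.
by field.
Qed.
End Mats.
Section Main.
Context {R : realType} {n : nat} (al : R).
Hypothesis al01 : 0 < al < 1.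

Lemma main_nz (w : 'cV[R]_n.+1) (a dt beta : R) (K : set 'cV[R]_n.+1) (M eps : R) :
  w ord_max 0 != 0 -> `|w ord_max 0 * a * dt| < 1 -> 0 <= M ->
  (forall x, K x -> forall i, `|x i 0| <= M) -> 0 < eps ->
  exists L f, in_NN al L f /\ forall x, K x ->
    (forall i, i != ord_max -> f x i 0 = x i 0) /\
    `|Tmap a dt beta w x ord_max 0 - f x ord_max 0| <= eps.
Proof.
move=> w0 ka1 M0 HM eps0.
set wl := w ord_max 0 in w0 ka1 *.
set ka := wl * a * dt in ka1.
set S := \sum_i `|w i 0| * M.
have Sb : forall x, K x -> `|dotv w x| <= S.
  move=> x Kx; rewrite /dotv; apply: le_trans (ler_norm_sum _ _ _) _.
  by apply: ler_sum => i _; rewrite normrM; apply: ler_wpM2l => //; apply: HM.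
have S0 : 0 <= S by apply: sumr_ge0 => i _; apply: mulr_ge0.
set phi := fun s => s + wl * (a * dt * tanh (s + beta)).
set m := 1 - `|ka|.
set Lc := 1 + `|ka|.
have m0 : 0 < m by rewrite /m subr_gt0.
have mL : m <= Lc by rewrite /m /Lc; have := normr_ge0 ka; lra.
have Hphi : forall u v, u <= v -> m * (v - u) <= phi v - phi u <= Lc * (v - u).
  move=> u v uv.
  have uvb : u + beta <= v + beta by rewrite lerD2r.
  have /andP[t1 t2] := tanh_lip uvb.
  have e : phi v - phi u = (v - u) + ka * (tanh (v + beta) - tanh (u + beta)).
    by rewrite /phi /ka; ring.
  rewrite e /m /Lc.
  set T := tanh (v + beta) - tanh (u + beta) in t1 t2 *.
  have /andP[k1 k2] : - `|ka| <= ka <= `|ka| by rewrite -ler_norml.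
  have kn := normr_ge0 ka.
  have q1 : ka * T <= `|ka| * (v - u).
    apply: le_trans (_ : `|ka| * T <= _); first by rewrite ler_wpM2r.
    by rewrite ler_wpM2l //; lra.
  have q2 : - (`|ka| * (v - u)) <= ka * T.
    apply: le_trans (_ : - `|ka| * T <= _); last by rewrite ler_wpM2r.
    by rewrite mulNr lerN2 ler_wpM2l //; lra.
  apply/andP; split; lra.
have wl0 : 0 < `|wl| by rewrite normr_gt0.
set E := eps * `|wl|.
have E0 : 0 < E by rewrite mulr_gt0.
have L0 : 0 < Lc by apply: lt_le_trans mL.
set h := E / Lc.
have h0 : 0 < h by rewrite divr_gt0.
set n0 := (Num.Def.trunc ((2 * S) / h)).+1.
have hn0 : 2 * S <= n0%:R * h.
  have := truncnS_gt ((2 * S) / h); rewrite -/n0 => H.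
  by rewrite -ler_pdivrMr //; apply: ltW.
have [p [Fp [Hp _]]] := approx1D al01 (-S) m0 mL E0 Hphi n0.
case: Fp => L [Q [B HQ]].
set cM : 'cV[R]_n.+1 := \col_i (if i == ord_max then 0 else - M).
set W1 := fun k => if k == 0%N then Wl Q k *m Pm w else Wl Q k.
set W2 := fun k => if k == L then Pinv w *m W1 k else W1 k.
set b2 := fun k => if k == L then Pinv w *m bl B M k + Pinv w *m cM else bl B M k.
exists L, (fun x => nn_eval al W2 b2 L x); split; first by exists W2, b2.
move=> x Kx.
have fx : nn_eval al W2 b2 L x = Pinv w *m (nn_eval al (Wl Q) (bl B M) L (Pm w *m x) + cM).
  by rewrite /W2 /b2 nn_post /W1 nn_pre mulmxDr.
have pos : forall i, i != ord_max -> 0 <= (Pm w *m x) i 0 + M.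
  move=> i hi; rewrite P_mul (negbTE hi).
  have := HM x Kx i; rewrite ler_norml; lra.
rewrite fx (nn_lift al01 Q B L pos).
have Py := P_mul w x.
move: (Pm w *m x) Py => y Py.
split.
  move=> i hi; rewrite Pinv_other // !mxE (negbTE hi) Py (negbTE hi); ring.
rewrite Pinv_last // !mxE eqxx Py eqxx -HQ.
have -> : (\val (@ord_max n) == n.+1.-1) = true by rewrite /= eqxx.
rewrite addr0.
under eq_bigr => j hj do rewrite !mxE (negbTE hj) Py (negbTE hj) addrK.
have hs := dotv_split w x.
set s := dotv w x in hs Hp *.
set S' := \sum_(j | j != ord_max) w j 0 * x j 0 in hs *.
have sb : -S <= s <= -S + n0%:R * h.
  have := Sb x Kx; rewrite -/s ler_norml => /andP[q1 q2]; apply/andP; split => //.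
  lra.
have [hp _] := Hp s sb.
have -> : x ord_max 0 + a * dt * tanh (s + beta) - (p s - S') / wl = (phi s - p s) / wl.
  rewrite /phi; have -> : x ord_max 0 = (s - S') / wl by rewrite hs -/wl; field.
  by field.
rewrite normrM normrV ?unitfE // ler_pdivrMr // -/E.
by rewrite distrC.
Qed.
End Main.
Lemma tanh_lip_abs {R : realType} (u v : R) : `|tanh u - tanh v| <= `|u - v|.
Proof.
have [uv|vu] := lerP u v.
  have /andP[h1 h2] := tanh_lip uv.
  by rewrite (distrC (tanh u)) ger0_norm.
have /andP[h1 h2] := tanh_lip (ltW vu).
by rewrite ger0_norm.
Qed.

Section Fin.
Context {R : realType} {n : nat}.

Lemma enorm_last (v : 'cV[R]_n.+1) :
  (forall i, i != ord_max -> v i 0 = 0) -> enorm v = `|v ord_max 0|.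
Proof.
move=> hv; rewrite /enorm (bigD1 ord_max) //= big1 ?addr0 ?sqrtr_sqr //.
by move=> i hi; rewrite hv // expr0n.
Qed.

Lemma Tmap_other (a dt beta : R) (w x : 'cV[R]_n.+1) i :
  i != ord_max -> Tmap a dt beta w x i 0 = x i 0.
Proof.
move=> hi; rewrite mxE ifN //; apply: contra hi => /eqP h; apply/eqP/val_inj.
Qed.

Lemma Tmap_last (a dt beta : R) (w x : 'cV[R]_n.+1) :
  Tmap a dt beta w x ord_max 0 = x ord_max 0 + a * dt * tanh (dotv w x + beta).
Proof. by rewrite mxE /= eqxx. Qed.

Lemma finish (f : 'cV[R]_n.+1 -> 'cV[R]_n.+1) (T1 T2 x : 'cV[R]_n.+1) eps :
  (forall i, i != ord_max -> f x i 0 = x i 0) ->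
  (forall i, i != ord_max -> T1 i 0 = x i 0) ->
  `|T1 ord_max 0 - T2 ord_max 0| <= eps / 2 ->
  `|T2 ord_max 0 - f x ord_max 0| <= eps / 2 -> enorm (T1 - f x) <= eps.
Proof.
move=> hf hT h1 h2.
rewrite enorm_last; last by move=> i hi; rewrite !mxE hf // hT // subrr.
rewrite !mxE.
have -> : T1 ord_max 0 - f x ord_max 0 =
  (T1 ord_max 0 - T2 ord_max 0) + (T2 ord_max 0 - f x ord_max 0) by ring.
apply: le_trans (ler_normD _ _) _; lra.
Qed.
End Fin.

Unset Implicit Arguments.

Theorem mainTheorem9 (R : realType) (alpha : R) (d : nat) (a : R) (w : 'cV[R]_d)
  (beta dt : R) :
  0 < alpha < 1 -> (2 <= d)%N ->
  let C := Num.max `|a| (\big[Num.max/0]_(i < d) `|w i 0|) in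
  0 < C -> 0 < dt -> dt < 1 / C ^+ 2 ->
  forall (K : set 'cV[R]_d), compact K ->
  forall eps : R, 0 < eps ->
  exists (L : nat) (f : 'cV[R]_d -> 'cV[R]_d),
    in_NN alpha L f /\
    forall x, K x -> enorm (Tmap a dt beta w x - f x) <= eps.
Proof.
move: w; case: d => [|n] w al01 hd; first by [].
move=> C C0 dt0 dtC K Kc eps eps0.
have [M [M0 HM]] := coord_bound Kc.
have eps20 : 0 < eps / 2 by rewrite divr_gt0.
have conclude : forall w' : 'cV[R]_n.+1, w' ord_max 0 != 0 ->
    `|w' ord_max 0 * a * dt| < 1 ->
    (forall x, K x -> `|Tmap a dt beta w x ord_max 0 - Tmap a dt beta w' x ord_max 0| <= eps / 2) ->
    exists (L : nat) (f : 'cV[R]_n.+1 -> 'cV[R]_n.+1),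
    in_NN alpha L f /\ forall x, K x -> enorm (Tmap a dt beta w x - f x) <= eps.
  move=> w' h1 h2 h3.
  have [L [f [Hf Hx]]] := main_nz al01 beta h1 h2 M0 HM eps20.
  exists L, f; split => // x Kx.
  have [hf hl] := Hx x Kx.
  apply: (finish (T2 := Tmap a dt beta w' x)) => //; last exact: h3.
  by move=> i hi; rewrite Tmap_other.
have aC : `|a| <= C by rewrite /C le_max lexx.
have dC2 : dt * C ^+ 2 < 1.
  by move: dtC; rewrite ltr_pdivlMr ?exprn_gt0 // mul1r.
have [wl0|wl0] := eqVneq (w ord_max 0) 0; last first.
  apply: (conclude w) => //; last by move=> x _; rewrite subrr normr0 ltW.
  have wC : `|w ord_max 0| <= C.
    rewrite /C le_max; apply/orP; right.
    exact: (le_bigmax _ (fun i : 'I_n.+1 => `|w i 0|) ord_max).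
  rewrite !normrM (ger0_norm (ltW dt0)).
  have h1 : `|w ord_max 0| * `|a| <= C * C.
    by apply: ler_pM => //; apply: normr_ge0.
  have h2 : `|w ord_max 0| * `|a| * dt <= C * C * dt by rewrite ler_wpM2r // ltW.
  apply: le_lt_trans h2 _; rewrite -expr2 mulrC //.
set c := `|a| * dt * (M + 1).
have c0 : 0 <= c by rewrite /c !mulr_ge0 // ?ltW //; lra.
set t := Num.min eps 1.
have t0 : 0 < t by rewrite /t lt_min eps0 ltr01.
have te : t <= eps by rewrite /t ge_min lexx.
have t1 : t <= 1 by rewrite /t ge_min lexx orbT.
set ep := t / (2 * (c + 1)).
have ep0 : 0 < ep by rewrite /ep divr_gt0 // mulr_gt0 // ltr_pwDr.
have epc : ep * (c + 1) = t / 2 by rewrite /ep; field; rewrite lt0r_neq0 // ltr_pwDr.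
have epc2 : ep * c <= t / 2 by lra.
have adM : `|a| * dt * M <= c.
  by rewrite /c ler_wpM2l ?lerDl // mulr_ge0 // ltW.
have ad1 : `|a| * dt <= c.
  by rewrite /c -{1}(mulr1 (`|a| * dt)) ler_wpM2l ?lerDr // mulr_ge0 // ltW.
set w' : 'cV[R]_n.+1 := \col_i (w i 0 + (if i == ord_max then ep else 0)).
have w'l : w' ord_max 0 = ep by rewrite /w' mxE eqxx wl0 add0r.
apply: (conclude w').
- by rewrite w'l lt0r_neq0.
- rewrite w'l normrM normrM (gtr0_norm ep0) (gtr0_norm dt0).
  have : ep * (`|a| * dt) <= ep * c by rewrite ler_wpM2l // ltW.
  lra.
move=> x Kx; rewrite !Tmap_last.
have hd' : dotv w' x = dotv w x + ep * x ord_max 0.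
  rewrite !dotv_split w'l wl0 mul0r add0r addrC; congr (_ + _).
  by apply: eq_bigr => j hj; rewrite /w' mxE (negbTE hj) addr0.
rewrite hd'.
have -> : x ord_max 0 + a * dt * tanh (dotv w x + beta) -
   (x ord_max 0 + a * dt * tanh (dotv w x + ep * x ord_max 0 + beta)) =
   a * dt * (tanh (dotv w x + beta) - tanh (dotv w x + ep * x ord_max 0 + beta)) by ring.
rewrite normrM normrM (ger0_norm (ltW dt0)).
have lip := tanh_lip_abs (dotv w x + beta) (dotv w x + ep * x ord_max 0 + beta).
have e2 : dotv w x + beta - (dotv w x + ep * x ord_max 0 + beta) = - (ep * x ord_max 0) by ring.
rewrite e2 normrN normrM (gtr0_norm ep0) in lip.
have hx := HM x Kx ord_max.
have q1 : ep * `|x ord_max 0| <= ep * M by rewrite ler_wpM2l // ltW.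
have ad0 : 0 <= `|a| * dt by rewrite mulr_ge0 // ltW.
have q2 : `|a| * dt * `|tanh (dotv w x + beta) - tanh (dotv w x + ep * x ord_max 0 + beta)|
   <= `|a| * dt * (ep * M).
  by rewrite ler_wpM2l //; apply: le_trans lip q1.
have q3 : `|a| * dt * (ep * M) <= ep * c.
  by rewrite mulrCA ler_wpM2l // ltW.
lra.
Qed.
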